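(* Let $\mathcal{C}_1$ and $\mathcal{C}_2$ be two Wilf-equivalent permutation classes with $p$-bases $\mathcal{B}_1$ and $\mathcal{B}_2$ respectively. For $i\in\{1,2\}$ and $x\in\{top,bottom,right,left\}$ let $\mathcal{M}_{i,x}=\{M_{\tau,x}:\tau\in\mathcal{B}_i\}$. Then the eight permutation classes $Av_{\mathfrak{S}}(\mathcal{M}_{i,x})$, $i\in\{1,2\}$, $x\in\{top,bottom,right,left\}$, are all Wilf-equivalent.
   Context: A permutation $\sigma$ of $\{1,\dots,n\}$ is identified with its permutation matrix ($M_\sigma(i,j)=1$ iff $i=\sigma(j)$, rows numbered bottom to top). A matrix is a submatrix of another if obtained by deleting rows and/or columns; the pattern order on permutations is this order restricted to permutation matrices, and a permutation class is a set closed downward for it. The $p$-basis of a class $\mathcal{C}$ is the set of permutations not in $\mathcal{C}$ that are minimal for the pattern order among those not in $\mathcal{C}$. Two permutation classes are Wilf-equivalent if for every $n$ they contain the same number of permutations of size $n$. For a permutation $\tau$, $M_{\tau,top}$ (resp. $M_{\tau,bottom}$) is the matrix obtained by adding a row of $0$'s above (resp. below) the permutation matrix of $\tau$, and $M_{\tau,right}$ (resp. $M_{\tau,left}$) by adding a column of $0$'s to its right (resp. left). $Av_{\mathfrak{S}}(\mathcal{M})$ is the set of permutations with no submatrix in $\mathcal{M}$. *)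

(* Defs.v *)
From mathcomp Require Import all_boot all_order all_algebra all_fingroup.
From mathcomp Require Import boolp.
Set Implicit Arguments. Unset Strict Implicit. Unset Printing Implicit Defensive.

(* Permutation matrix: M_s(i,j) = 1 iff i = s(j); row index i, row 0 is the
   bottom row. Entries are booleans (true = 1, false = 0). *)
Definition permmx n (s : 'S_n) : 'M[bool]_(n, n) := \matrix_(i, j) (i == s j).

Definition submx_of p q m n (A : 'M[bool]_(p, q)) (B : 'M[bool]_(m, n)) : Prop :=
  exists (f : 'I_p -> 'I_m) (g : 'I_q -> 'I_n),
    (forall i i' : 'I_p, (i < i')%N -> (f i < f i')%N) /\
    (forall j j' : 'I_q, (j < j')%N -> (g j < g j')%N) /\
    (forall i j, A i j = B (f i) (g j)).

Definition patt k n (s : 'S_k) (t : 'S_n) : Prop := submx_of (permmx s) (permmx t).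

Definition permset := forall n, {set 'S_n}.

Definition is_perm_class (C : permset) : Prop :=
  forall k n (s : 'S_k) (t : 'S_n), t \in C n -> patt s t -> s \in C k.

Definition is_pbasis (C B : permset) : Prop :=
  forall k (s : 'S_k),
    s \in B k <->
    (s \notin C k /\
     forall k' (s' : 'S_k'), s' \notin C k' -> patt s' s -> patt s s').

Definition wilf_equiv (C1 C2 : permset) : Prop :=
  forall n, #|C1 n| = #|C2 n|.

(* M_{tau,top}: a zero row added above (new row index k, the top). *)
Definition Mtop k (t : 'S_k) : 'M[bool]_(k.+1, k) :=
  \matrix_(i, j) (val i == val (t j)).
(* M_{tau,bottom}: a zero row added below (new row index 0). *)
Definition Mbottom k (t : 'S_k) : 'M[bool]_(k.+1, k) :=
  \matrix_(i, j) (val i == (val (t j)).+1).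
(* M_{tau,right}: a zero column added to the right (new column index k). *)
Definition Mright k (t : 'S_k) : 'M[bool]_(k, k.+1) :=
  \matrix_(i, j) [exists j' : 'I_k, (val j' == val j) && (i == t j')].
(* M_{tau,left}: a zero column added to the left (new column index 0). *)
Definition Mleft k (t : 'S_k) : 'M[bool]_(k, k.+1) :=
  \matrix_(i, j) [exists j' : 'I_k, (val j == (val j').+1) && (i == t j')].

Inductive side := Top | Bottom | Right | Left.

Definition contains_side (x : side) k (t : 'S_k) n (s : 'S_n) : Prop :=
  match x with
  | Top => submx_of (Mtop t) (permmx s)
  | Bottom => submx_of (Mbottom t) (permmx s)
  | Right => submx_of (Mright t) (permmx s)
  | Left => submx_of (Mleft t) (permmx s)
  end.

Definition AvS (x : side) (B : permset) : permset :=
  fun n => [set s : 'S_n | `[< forall k (t : 'S_k), t \in B k -> ~ contains_side x t s >] ].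

(* Main.v *)
Require Import Defs.
From mathcomp Require Import all_boot all_order all_algebra all_fingroup.
From mathcomp Require Import boolp.
From mathcomp Require Import zify.
Set Implicit Arguments. Unset Strict Implicit. Unset Printing Implicit Defensive.

Definition incr p m (f : 'I_p -> 'I_m) := forall i i' : 'I_p, (i < i')%N -> (f i < f i')%N.

Lemma lift_ltn m (h : 'I_m.+1) (i j : 'I_m) : (lift h i < lift h j)%N = (i < j)%N.
Proof. by rewrite /= !ltnNge leq_bump2. Qed.

Lemma incr_lift p m (h : 'I_m.+1) (f : 'I_p -> 'I_m) : incr f -> incr (lift h \o f).
Proof. by move=> Hf i i' /Hf; rewrite /= -(lift_ltn h). Qed.

Definition delf n (s : 'S_n.+1) (c : 'I_n.+1) (k : 'I_n) : 'I_n :=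
  odflt k (unlift (s c) (s (lift c k))).

Lemma delfE n (s : 'S_n.+1) c k : lift (s c) (delf s c k) = s (lift c k).
Proof.
have ne : s c != s (lift c k) by rewrite (inj_eq perm_inj) neq_lift.
by case: (unlift_some ne) => j E1 E2; rewrite /delf E2 /= E1.
Qed.

Lemma delf_inj n (s : 'S_n.+1) c : injective (delf s c).
Proof.
move=> k1 k2 E; have := delfE s c k1; by rewrite E delfE => /perm_inj /lift_inj.
Qed.

Definition delp n (s : 'S_n.+1) c : 'S_n := perm (@delf_inj n s c).

Lemma delpE n (s : 'S_n.+1) c k : s (lift c k) = lift (s c) (delp s c k).
Proof. by rewrite permE delfE. Qed.

Lemma delpK n (s : 'S_n.+1) c : lift_perm c (s c) (delp s c) = s.
Proof.
apply/permP=> x; case: (unliftP c x) => [k|] ->.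
  by rewrite lift_perm_lift delpE.
by rewrite lift_perm_id.
Qed.

Lemma lift_permD n (c r : 'I_n.+1) (p : 'S_n) : delp (lift_perm c r p) c = p.
Proof.
apply/permP=> k; apply: (@lift_inj _ r).
by rewrite -{1}(lift_perm_id c r p) -delpE lift_perm_lift.
Qed.

Lemma unlift_fun p m (h : 'I_m.+1) (f : 'I_p -> 'I_m.+1) :
  (forall a, f a != h) -> exists f' : 'I_p -> 'I_m, forall a, f a = lift h (f' a).
Proof.
move=> H; have H' : forall a, h != f a by move=> a; rewrite eq_sym.
exists (fun a => s2val (unlift_some (H' a))) => a.
by case: (unlift_some (H' a)).
Qed.

Lemma permmxE n (s : 'S_n) i j : permmx s i j = (i == s j).
Proof. by rewrite mxE. Qed.

Lemma core k n (t : 'S_k) (s : 'S_n.+1) (c : 'I_n.+1) :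
  patt t (delp s c) <-> exists f g, [/\ incr f, incr g, forall b, g b != c &
     forall a b, (a == t b) = (f a == s (g b))].
Proof.
split.
  move=> [f [g [Hf [Hg HE]]]].
  exists (lift (s c) \o f), (lift c \o g); split.
  - exact: incr_lift.
  - exact: incr_lift.
  - by move=> b; rewrite /= lift_eqF.
  move=> a b; have := HE a b; rewrite !permmxE => ->.
  by rewrite /= delpE (inj_eq lift_inj).
move=> [f [g [Hf Hg Hc HE]]].
have Hr : forall a, f a != s c.
  move=> a; have := HE a (t^-1 a)%g; rewrite permKV eqxx => /esym/eqP ->.
  by rewrite (inj_eq perm_inj).
have [f' Ef] := unlift_fun Hr; have [g' Eg] := unlift_fun Hc.
exists f', g'; split; [|split].
- by move=> i i' /Hf; rewrite !Ef lift_ltn.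
- by move=> i i' /Hg; rewrite !Eg lift_ltn.
move=> a b; rewrite !permmxE HE Ef Eg delpE.
by rewrite (inj_eq lift_inj).
Qed.

Lemma ext_max p m (h0 : 'I_p -> 'I_m.+1) : incr h0 -> (forall a, h0 a != ord_max) ->
  exists h : 'I_p.+1 -> 'I_m.+1,
    [/\ incr h, h ord_max = ord_max & forall a, h (lift ord_max a) = h0 a].
Proof.
move=> Hi Hn.
exists (fun i => if unlift ord_max i is Some a then h0 a else ord_max); split.
- move=> i i'; case: (unliftP ord_max i) => [a|] ->;
    case: (unliftP ord_max i') => [a'|] ->.
  + by rewrite lift_ltn => /Hi.
  + move=> _; have := Hn a; have := ltn_ord (h0 a).
    by rewrite -(inj_eq val_inj) /=; lia.
  + by rewrite lift_max /=; have := ltn_ord a'; rewrite /=; lia.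
  + by rewrite ltnn.
- by rewrite unlift_none.
- by move=> a; rewrite liftK.
Qed.

Lemma ext_0 p m (h0 : 'I_p -> 'I_m.+1) : incr h0 -> (forall a, h0 a != ord0) ->
  exists h : 'I_p.+1 -> 'I_m.+1,
    [/\ incr h, h ord0 = ord0 & forall a, h (lift ord0 a) = h0 a].
Proof.
move=> Hi Hn.
exists (fun i => if unlift ord0 i is Some a then h0 a else ord0); split.
- move=> i i'; case: (unliftP ord0 i) => [a|] ->;
    case: (unliftP ord0 i') => [a'|] ->.
  + by rewrite lift_ltn => /Hi.
  + by rewrite lift0.
  + move=> _; have := Hn a'.
    by rewrite -(inj_eq val_inj) /=; lia.
  + by rewrite ltnn.
- by rewrite unlift_none.
- by move=> a; rewrite liftK.
Qed.

Lemma vlmax m (a : 'I_m) : val (lift ord_max a) = val a.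
Proof. exact: lift_max. Qed.
Lemma vl0 m (a : 'I_m) : val (lift ord0 a) = (val a).+1.
Proof. by []. Qed.

Definition cx (x : side) n (s : 'S_n.+1) : 'I_n.+1 :=
  match x with
  | Top => (s^-1)%g ord_max
  | Bottom => (s^-1)%g ord0
  | Right => ord_max
  | Left => ord0
  end.

Lemma rowcol k n (t : 'S_k) (s : 'S_n) f g :
  (forall a b, (a == t b) = (f a == s (g b))) -> forall a, f a = s (g ((t^-1)%g a)).
Proof. by move=> HE a; apply/eqP; rewrite -HE permKV. Qed.

Lemma top_iff k n (t : 'S_k) (s : 'S_n.+1) :
  contains_side Top t s <-> patt t (delp s (cx Top s)).
Proof.
rewrite core /=; split.
  move=> [f [g [Hf [Hg HE]]]].
  have HE' : forall a b, (a == t b) = (f (lift ord_max a) == s (g b)).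
    by move=> a b; have := HE (lift ord_max a) b; rewrite !mxE vlmax (inj_eq val_inj).
  exists (f \o lift ord_max), g; split => //.
  - by move=> i i' /=; rewrite -(lift_ltn ord_max) => /Hf.
  - move=> b; apply/negP => /eqP Eb.
    have := HE' (t b) b; rewrite eqxx Eb permKV => /esym/eqP Em.
    have : (lift ord_max (t b) < @ord_max k)%N by rewrite lift_max /=.
    move/Hf; rewrite Em; have := ltn_ord (f ord_max); rewrite /=; lia.
move=> [f0 [g [Hf0 Hg Hc HE]]].
have Hn : forall a, f0 a != ord_max.
  move=> a; rewrite (rowcol HE); apply/negP => /eqP E.
  by move: (Hc ((t^-1)%g a)); rewrite -E permK eqxx.
have [f [Hf Hfm Hfl]] := ext_max Hf0 Hn.
exists f, g; split => //; split => // i j; rewrite !mxE.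
case: (unliftP (@ord_max k) i) => [a|] ->.
  by rewrite Hfl vlmax (inj_eq val_inj) HE.
rewrite Hfm /=; have := ltn_ord (t j); have := Hc j.
move=> Hcj Ht; have -> : (k == t j) = false by apply/eqP; lia.
apply/esym/eqP => E; move/eqP: Hcj; apply; by rewrite E permK.
Qed.

Lemma bottom_iff k n (t : 'S_k) (s : 'S_n.+1) :
  contains_side Bottom t s <-> patt t (delp s (cx Bottom s)).
Proof.
rewrite core /=; split.
  move=> [f [g [Hf [Hg HE]]]].
  have HE' : forall a b, (a == t b) = (f (lift ord0 a) == s (g b)).
    by move=> a b; have := HE (lift ord0 a) b; rewrite !mxE vl0 eqSS (inj_eq val_inj).
  exists (f \o lift ord0), g; split => //.
  - by move=> i i' /=; rewrite -(lift_ltn ord0) => /Hf.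
  - move=> b; apply/negP => /eqP Eb.
    have := HE' (t b) b; rewrite eqxx Eb permKV => /esym/eqP Em.
    have : (@ord0 k < lift ord0 (t b))%N by rewrite vl0.
    by move/Hf; rewrite Em.
move=> [f0 [g [Hf0 Hg Hc HE]]].
have Hn : forall a, f0 a != ord0.
  move=> a; rewrite (rowcol HE); apply/negP => /eqP E.
  by move: (Hc ((t^-1)%g a)); rewrite -E permK eqxx.
have [f [Hf Hfm Hfl]] := ext_0 Hf0 Hn.
exists f, g; split => //; split => // i j; rewrite !mxE.
case: (unliftP (@ord0 k) i) => [a|] ->.
  by rewrite Hfl vl0 eqSS (inj_eq val_inj) HE.
rewrite Hfm /=; have := Hc j.
move=> Hcj.
apply/esym/eqP => E; move/eqP: Hcj; apply; by rewrite E permK.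
Qed.

Lemma Mright_lift k (t : 'S_k) i b : Mright t i (lift ord_max b) = (i == t b).
Proof.
rewrite mxE; apply/existsP/idP => [[j' /andP[/eqP E H]]|H].
  by have -> : b = j' by apply: val_inj; rewrite E vlmax.
by exists b; rewrite vlmax eqxx.
Qed.

Lemma Mright_max k (t : 'S_k) i : Mright t i ord_max = false.
Proof.
rewrite mxE; apply/existsP => [[j' /andP[/eqP E _]]].
by have := ltn_ord j'; rewrite E /= ltnn.
Qed.

Lemma Mleft_lift k (t : 'S_k) i b : Mleft t i (lift ord0 b) = (i == t b).
Proof.
rewrite mxE; apply/existsP/idP => [[j' /andP[/eqP E H]]|H].
  by have -> : b = j' by apply: val_inj; move: E; rewrite vl0 => -[].
by exists b; rewrite vl0 eqxx.
Qed.

Lemma Mleft_0 k (t : 'S_k) i : Mleft t i ord0 = false.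
Proof. by rewrite mxE; apply/existsP => [[j' /andP[/eqP E _]]]. Qed.

Lemma right_iff k n (t : 'S_k) (s : 'S_n.+1) :
  contains_side Right t s <-> patt t (delp s (cx Right s)).
Proof.
rewrite core /=; split.
  move=> [f [g [Hf [Hg HE]]]].
  exists f, (g \o lift ord_max); split => //.
  - by move=> i i' /=; rewrite -(lift_ltn ord_max) => /Hg.
  - move=> b; apply/negP => /eqP Eb.
    have : (lift ord_max b < @ord_max k)%N by rewrite lift_max /=.
    move/Hg; rewrite /= in Eb; rewrite Eb; have := ltn_ord (g ord_max); rewrite /=; lia.
  - by move=> a b; have := HE a (lift ord_max b); rewrite Mright_lift permmxE.
move=> [f [g0 [Hf Hg0 Hc HE]]].
have [g [Hg Hgm Hgl]] := ext_max Hg0 Hc.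
exists f, g; split => //; split => // i j.
case: (unliftP (@ord_max k) j) => [b|] ->.
  by rewrite Mright_lift permmxE Hgl HE.
rewrite Mright_max permmxE Hgm (rowcol HE); apply/esym/eqP => /perm_inj E.
by move: (Hc ((t^-1)%g i)); rewrite E eqxx.
Qed.

Lemma left_iff k n (t : 'S_k) (s : 'S_n.+1) :
  contains_side Left t s <-> patt t (delp s (cx Left s)).
Proof.
rewrite core /=; split.
  move=> [f [g [Hf [Hg HE]]]].
  exists f, (g \o lift ord0); split => //.
  - by move=> i i' /=; rewrite -(lift_ltn ord0) => /Hg.
  - move=> b; apply/negP => /eqP Eb.
    have : (@ord0 k < lift ord0 b)%N by rewrite vl0.
    by move/Hg; rewrite /= in Eb; rewrite Eb.
  - by move=> a b; have := HE a (lift ord0 b); rewrite Mleft_lift permmxE.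
move=> [f [g0 [Hf Hg0 Hc HE]]].
have [g [Hg Hgm Hgl]] := ext_0 Hg0 Hc.
exists f, g; split => //; split => // i j.
case: (unliftP (@ord0 k) j) => [b|] ->.
  by rewrite Mleft_lift permmxE Hgl HE.
rewrite Mleft_0 permmxE Hgm (rowcol HE); apply/esym/eqP => /perm_inj E.
by move: (Hc ((t^-1)%g i)); rewrite E eqxx.
Qed.

Lemma side_iff x k n (t : 'S_k) (s : 'S_n.+1) :
  contains_side x t s <-> patt t (delp s (cx x s)).
Proof.
case: x; [exact: top_iff | exact: bottom_iff | exact: right_iff | exact: left_iff].
Qed.

Lemma incr_inj p m (f : 'I_p -> 'I_m) : incr f -> injective f.
Proof.
move=> Hf i j E; apply/eqP; case: (ltngtP i j) => [/Hf|/Hf|/val_inj -> //];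
  by rewrite E ltnn.
Qed.

Lemma incr_ge p m (f : 'I_p -> 'I_m) : incr f -> forall i : 'I_p, (i <= f i)%N.
Proof.
move=> Hf i; move Ei: (nat_of_ord i) => q; elim: q i Ei => [//|q IH] i Ei.
have lq : (q < p)%N by have := ltn_ord i; lia.
have := IH (Ordinal lq) erefl; have : (Ordinal lq < i)%N by rewrite /= Ei.
move/Hf; lia.
Qed.

Lemma incr_id p (f : 'I_p -> 'I_p) : incr f -> forall i, f i = i.
Proof.
move=> Hf i; apply: val_inj; apply/eqP; rewrite eqn_leq (incr_ge Hf) andbT.
pose g j := rev_ord (f (rev_ord j)).
have Hg : incr g.
  move=> j j' H; rewrite /g /=.
  have H' : (rev_ord j' < rev_ord j)%N by rewrite /=; have := ltn_ord j'; lia.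
  move/Hf: H'; have := ltn_ord (f (rev_ord j)); have := ltn_ord (f (rev_ord j')); lia.
have := incr_ge Hg (rev_ord i); rewrite /g rev_ordK /=.
have := ltn_ord i; have := ltn_ord (f i); lia.
Qed.

Lemma patt_trans a b c (r : 'S_a) (s : 'S_b) (t : 'S_c) :
  patt r s -> patt s t -> patt r t.
Proof.
move=> [f [g [Hf [Hg HE]]]] [f' [g' [Hf' [Hg' HE']]]].
exists (f' \o f), (g' \o g); split; [|split].
- by move=> i i' /Hf /Hf'.
- by move=> i i' /Hg /Hg'.
by move=> i j; rewrite HE HE'.
Qed.

Lemma patt_refl a (r : 'S_a) : patt r r.
Proof. by exists id, id; split. Qed.

Lemma patt_size k n (s : 'S_k) (t : 'S_n) : patt s t -> (k <= n)%N.
Proof.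
move=> [f [_ [Hf _]]]; have := leq_card f (incr_inj Hf).
by rewrite !card_ord.
Qed.

Lemma patt_sym_eq k n (s : 'S_k) (t : 'S_n) : k = n -> patt s t -> patt t s.
Proof.
move=> E; subst n => [[f [g [Hf [Hg HE]]]]].
exists id, id; split; [|split] => // i j.
by rewrite HE !incr_id.
Qed.

Lemma basis_avoid (C B : permset) : is_perm_class C -> is_pbasis C B ->
  forall n (s : 'S_n),
  (forall k (t : 'S_k), t \in B k -> ~ patt t s) <-> s \in C n.
Proof.
move=> HC HB n s; split; last first.
  move=> Hs k t tB Hts; have := (HB k t).1 tB => -[tC _].
  by move: tC; rewrite (HC _ _ _ _ Hs Hts).
have main : forall m n (s : 'S_n), (n < m)%N -> s \notin C n ->
    exists k (t : 'S_k), t \in B k /\ patt t s.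
  clear n s; elim=> [//|m IH] n s Hn sC.
  have [sB|sNB] := boolP (s \in B n).
    by exists n, s; split => //; exact: patt_refl.
  have : ~ (forall k' (s' : 'S_k'), s' \notin C k' -> patt s' s -> patt s s').
    by move=> Hall; move/negP: sNB; apply; apply/(HB n s).2.
  move=> /existsNP [k' /existsNP [s' /not_implyP [s'C /not_implyP [Hs's Hn']]]].
  have le := patt_size Hs's.
  case: (ltngtP k' n) => [lt|gt|eq]; last first.
  - by case: Hn'; exact: patt_sym_eq.
  - by move: le; rewrite leqNgt gt.
  have [k [t [tB Ht]]] := IH k' s' (leq_trans lt Hn) s'C.
  by exists k, t; split => //; exact: patt_trans Hs's.
move=> H; apply/negPn/negP => sC.
suff : exists k (t : 'S_k), t \in B k /\ patt t s.
  by move=> [k [t [tB Hts]]]; exact: (H k t tB Hts).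
exact: main (ltnSn n) sC.
Qed.

Lemma count_gen n (C : {set 'S_n}) (cxs : 'S_n.+1 -> 'I_n.+1)
  (ca ra : 'I_n.+1 -> 'I_n.+1) (idx' : 'S_n.+1 -> 'I_n.+1) :
  (forall a p, cxs (lift_perm (ca a) (ra a) p) = ca a) ->
  (forall a p, idx' (lift_perm (ca a) (ra a) p) = a) ->
  (forall s, ca (idx' s) = cxs s) -> (forall s, ra (idx' s) = s (cxs s)) ->
  #|[set s | delp s (cxs s) \in C]| = n.+1 * #|C|.
Proof.
move=> H1 H2 H3 H4.
pose F := fun (q : 'I_n.+1 * 'S_n) => lift_perm (ca q.1) (ra q.1) q.2.
have Finj : injective F.
  move=> [a p] [b p'] E; rewrite /F /= in E.
  have Eab : a = b by have := H2 a p; rewrite E H2.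
  subst b; congr pair.
  by rewrite -(lift_permD (ca a) (ra a) p) [lift_perm _ _ p]E lift_permD.
have -> : [set s | delp s (cxs s) \in C] = F @: (setX [set: 'I_n.+1] C).
  apply/setP => s; rewrite inE; apply/idP/imsetP.
  - move=> Hs; exists (idx' s, delp s (cxs s)); first by rewrite in_setX in_setT Hs.
    by rewrite /F /= H3 H4 delpK.
  - move=> [[a p]]; rewrite in_setX => /andP[_ pC] ->.
    by rewrite /F /= H1 lift_permD.
by rewrite card_imset // cardsX cardsT card_ord.
Qed.

Lemma AvS_char x (C B : permset) : is_perm_class C -> is_pbasis C B ->
  forall n, AvS x B n.+1 = [set s | delp s (cx x s) \in C n].
Proof.
move=> HC HB n; apply/setP => s; rewrite !inE.
apply/idP/idP => [/asboolP H | H].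
  apply/(basis_avoid HC HB) => k t tB; rewrite -side_iff; exact: H.
apply/asboolP => k t tB; rewrite side_iff; exact: (proj2 (basis_avoid HC HB (delp s (cx x s))) H k t tB).
Qed.

Lemma AvS_card x (C B : permset) : is_perm_class C -> is_pbasis C B ->
  forall n, #|AvS x B n.+1| = n.+1 * #|C n|.
Proof.
move=> HC HB n; rewrite (AvS_char x HC HB).
case: x.
- apply: (@count_gen n (C n) (@cx Top n) id (fun _ => ord_max) (@cx Top n)) => //=.
  + by move=> a p; rewrite -{2}(lift_perm_id a ord_max p) permK.
  + by move=> a p; rewrite -{2}(lift_perm_id a ord_max p) permK.
  + by move=> s; rewrite permKV.
- apply: (@count_gen n (C n) (@cx Bottom n) id (fun _ => ord0) (@cx Bottom n)) => //=.
  + by move=> a p; rewrite -{2}(lift_perm_id a ord0 p) permK.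
  + by move=> a p; rewrite -{2}(lift_perm_id a ord0 p) permK.
  + by move=> s; rewrite permKV.
- apply: (@count_gen n (C n) (@cx Right n) (fun _ => ord_max) id (fun s => s ord_max)) => //=.
  by move=> a p; rewrite lift_perm_id.
- apply: (@count_gen n (C n) (@cx Left n) (fun _ => ord0) id (fun s => s ord0)) => //=.
  by move=> a p; rewrite lift_perm_id.
Qed.

Lemma AvS0 x (B : permset) : AvS x B 0 = [set: 'S_0].
Proof.
apply/setP => s; rewrite !inE; apply/asboolP => k t _.
by case: x => -[f [g _]] /=; [case: (f ord0) | case: (f ord0) | case: (g ord0) | case: (g ord0)].
Qed.

Unset Implicit Arguments.
Theorem corollary3 (C1 C2 B1 B2 : permset) :
  is_perm_class C1 -> is_perm_class C2 ->
  is_pbasis C1 B1 -> is_pbasis C2 B2 ->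
  wilf_equiv C1 C2 ->
  forall (i j : bool) (x y : side),
    wilf_equiv (AvS x (if i then B1 else B2)) (AvS y (if j then B1 else B2)).
Proof.
move=> HC1 HC2 HB1 HB2 HW i j x y [|n]; first by rewrite !AvS0.
have key : forall (b : bool) z, #|AvS z (if b then B1 else B2) n.+1| = n.+1 * #|C1 n|.
  move=> [] z; first exact: AvS_card HC1 HB1 n.
  by rewrite HW; exact: AvS_card HC2 HB2 n.
by rewrite !key.
Qed.
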